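(* Let $\mathcal{F},\mathcal{G}:(\mathcal{K},c)\to\mathcal{K}'$ be bilax functors and $b:A\to A$ a $c$-bimonad in $\mathcal{K}$ with structure $(\mu,\eta,\Delta,\varepsilon)$. (i) If $\phi:\mathcal{F}\Rightarrow\mathcal{G}$ is a colax natural transformation of colax functors, then $\lambda:=(\mathcal{G}(\eta)\circ1_{\phi_A})\cdot\phi_{\mathrm{id}_A}\cdot(1_{\phi_A}\circ\mathcal{F}^0_A):\phi_A\Rightarrow\mathcal{G}(b)\circ\phi_A$ makes $\phi_A$ a left comodule over the comonad $\mathcal{G}(b)$ with comultiplication $\mathcal{G}_{2;b,b}\cdot\mathcal{G}(\Delta)$ and counit $\mathcal{G}_{0;A}\cdot\mathcal{G}(\varepsilon)$. (ii) Dually, if $\psi:\mathcal{F}\Rightarrow\mathcal{G}$ is a lax natural transformation of lax functors, then $\rhd:=(1_{\psi_A}\circ\mathcal{F}_{0;A})\cdot\psi_{\mathrm{id}_A}\cdot(\mathcal{G}(\varepsilon)\circ1_{\psi_A}):\mathcal{G}(b)\circ\psi_A\Rightarrow\psi_A$ makes $\psi_A$ a left module over the monad $\mathcal{G}(b)$ with multiplication $\mathcal{G}(\mu)\cdot\mathcal{G}^2_{b,b}$ and unit $\mathcal{G}(\eta)\cdot\mathcal{G}^0_A$.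
   Context: Conventions: $\circ$ horizontal composition, $\cdot$ vertical composition ($\beta\cdot\alpha$: first $\alpha$), $1$ identity 2-cells. A bilax functor $(\mathcal{F},\nu):(\mathcal{K},c)\to\mathcal{K}'$ (where $c$ is a Yang–Baxter operator of $\mathcal{K}$, i.e. natural 2-cells $c_{g,f}:g\circ f\Rightarrow f\circ g$ for 1-endocells satisfying the Yang–Baxter equation and $c_{\mathrm{id},f}=c_{f,\mathrm{id}}=1$) is simultaneously a lax functor (structure $\mathcal{F}^2_{g,f}:\mathcal{F}(g)\circ\mathcal{F}(f)\Rightarrow\mathcal{F}(gf)$, $\mathcal{F}^0_A:\mathrm{id}\Rightarrow\mathcal{F}(\mathrm{id}_A)$) and a colax functor (structure $\mathcal{F}_{2;g,f}:\mathcal{F}(gf)\Rightarrow\mathcal{F}(g)\circ\mathcal{F}(f)$, $\mathcal{F}_{0;A}:\mathcal{F}(\mathrm{id}_A)\Rightarrow\mathrm{id}$) with a Yang–Baxter operator $\nu$ satisfying the distributive-law and bilaxity axioms; in particular $\mathcal{F}^0_A\circ\mathcal{F}^0_A=\mathcal{F}_{2;\mathrm{id},\mathrm{id}}\cdot\mathcal{F}^0_A$, $\mathcal{F}_{0;A}\circ\mathcal{F}_{0;A}=\mathcal{F}_{0;A}\cdot\mathcal{F}^2_{\mathrm{id},\mathrm{id}}$, $\mathcal{F}_{0;A}\cdot\mathcal{F}^0_A=1$. A $c$-bimonad $b$ is a 1-endocell with monad $(\mu,\eta)$ and comonad $(\Delta,\varepsilon)$ such that $c_{b,b}$ is a left and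 right distributive law for both, $(\mu\circ\mu)\cdot(1\circ c_{b,b}\circ1)\cdot(\Delta\circ\Delta)=\Delta\cdot\mu$, $\varepsilon\circ\varepsilon=\varepsilon\cdot\mu$, $\eta\circ\eta=\Delta\cdot\eta$, $\varepsilon\cdot\eta=1$. A colax natural transformation $\phi:\mathcal{F}\Rightarrow\mathcal{G}$ of colax functors: 1-cells $\phi_A:\mathcal{F}(A)\to\mathcal{G}(A)$ and 2-cells $\phi_f:\phi_B\circ\mathcal{F}(f)\Rightarrow\mathcal{G}(f)\circ\phi_A$ natural in $f$ with $(\mathcal{G}_{2;g,f}\circ1)\cdot\phi_{gf}=(1\circ\phi_f)\cdot(\phi_g\circ1)\cdot(1\circ\mathcal{F}_{2;g,f})$ and $(\mathcal{G}_{0;A}\circ1)\cdot\phi_{\mathrm{id}_A}=1\circ\mathcal{F}_{0;A}$. A lax natural transformation $\psi:\mathcal{F}\Rightarrow\mathcal{G}$ of lax functors: 2-cells $\psi_f:\mathcal{G}(f)\circ\psi_A\Rightarrow\psi_B\circ\mathcal{F}(f)$ natural with $\psi_{gf}\cdot(\mathcal{G}^2_{g,f}\circ1)=(1\circ\mathcal{F}^2_{g,f})\cdot(\psi_g\circ1)\cdot(1\circ\psi_f)$ and $\psi_{\mathrm{id}_A}\cdot(\mathcal{G}^0_A\circ1)=1\circ\mathcal{F}^0_A$. A left comodule over a comonad $(d,\Delta_d,\varepsilon_d)$ on $A$ is a 1-cell $x$ into $A$ with $\lambda:x\Rightarrow d\circ x$ such that $(\Delta_d\circ1)\cdot\lambda=(1\circ\lambda)\cdot\lambda$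 and $(\varepsilon_d\circ1)\cdot\lambda=1$; left modules over monads are defined dually. *)

(* Defs.v *)
Set Implicit Arguments.
Unset Strict Implicit.

(* Strict 2-categories.  Strictness (associativity and unit laws of     *)
(* 1-cell composition) holds as equalities of 1-cells; the coherence    *)
(* 2-cells are the identity 2-cells transported along these equalities  *)
(* ([eqc] below).                                                       *)

Unset Implicit Arguments.
Record twodata := TwoData {
  ob : Type;
  hom : ob -> ob -> Type;
  c2 : forall A B : ob, hom A B -> hom A B -> Type;
  idm : forall A : ob, hom A A;
  comp : forall A B C : ob, hom B C -> hom A B -> hom A C;
  id2 : forall (A B : ob) (f : hom A B), c2 A B f f;
  vcomp : forall (A B : ob) (f g h : hom A B), c2 A B g h -> c2 A B f g -> c2 A B f h;
  hcomp : forall (A B C : ob) (g g' : hom B C) (f f' : hom A B),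
      c2 B C g g' -> c2 A B f f' -> c2 A C (comp A B C g f) (comp A B C g' f')
}.

Set Implicit Arguments.
Arguments hom {_} _ _.
Arguments c2 {_ _ _} _ _.
Arguments idm {_} _.
Arguments comp {_ _ _ _} _ _.
Arguments id2 {_ _ _} _.
Arguments vcomp {_ _ _ _ _ _} _ _.
Arguments hcomp {_ _ _ _ _ _ _ _} _ _.

(* g ⊚ f : first f then g;  β • α : vertical, first α;  β ⊙ α : horizontal *)
Notation "g ⊚ f" := (comp g f) (at level 40, left associativity).
Notation "β ⊙ α" := (hcomp β α) (at level 40, left associativity).
Notation "β • α" := (vcomp β α) (at level 50, left associativity).

Definition eqc {K : twodata} {A B : ob K} {f g : hom A B} (e : f = g) : c2 f g :=
  match e in _ = g0 return c2 f g0 with eq_refl => id2 f end.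

Record is_twocat (K : twodata) : Prop := {
  compA : forall (A B C D : ob K) (h : hom C D) (g : hom B C) (f : hom A B),
      h ⊚ (g ⊚ f) = (h ⊚ g) ⊚ f;
  comp1l : forall (A B : ob K) (f : hom A B), idm B ⊚ f = f;
  comp1r : forall (A B : ob K) (f : hom A B), f ⊚ idm A = f;
  vcompA : forall (A B : ob K) (f g h k : hom A B)
      (γ : c2 h k) (β : c2 g h) (α : c2 f g), γ • (β • α) = (γ • β) • α;
  vcomp1l : forall (A B : ob K) (f g : hom A B) (α : c2 f g), id2 g • α = α;
  vcomp1r : forall (A B : ob K) (f g : hom A B) (α : c2 f g), α • id2 f = α;
  hcomp_id2 : forall (A B C : ob K) (g : hom B C) (f : hom A B),
      id2 g ⊙ id2 f = id2 (g ⊚ f);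
  interchange : forall (A B C : ob K) (g g' g'' : hom B C) (f f' f'' : hom A B)
      (β' : c2 g' g'') (β : c2 g g') (α' : c2 f' f'') (α : c2 f f'),
      (β' • β) ⊙ (α' • α) = (β' ⊙ α') • (β ⊙ α);
  hcomp1l : forall (A B : ob K) (f f' : hom A B) (α : c2 f f'),
      id2 (idm B) ⊙ α = eqc (eq_sym (comp1l f')) • α • eqc (comp1l f);
  hcomp1r : forall (A B : ob K) (f f' : hom A B) (α : c2 f f'),
      α ⊙ id2 (idm A) = eqc (eq_sym (comp1r f')) • α • eqc (comp1r f);
  hcompA : forall (A B C D : ob K) (h h' : hom C D) (g g' : hom B C) (f f' : hom A B)
      (γ : c2 h h') (β : c2 g g') (α : c2 f f'),
      γ ⊙ (β ⊙ α) = eqc (eq_sym (compA h' g' f')) • ((γ ⊙ β) ⊙ α) • eqc (compA h g f)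
}.

Record twocat := TwoCat { tdata :> twodata; tlaws : is_twocat tdata }.

Definition cA {K : twocat} {A B C D : ob K} (h : hom C D) (g : hom B C) (f : hom A B)
  : h ⊚ (g ⊚ f) = (h ⊚ g) ⊚ f := compA (tlaws K) h g f.
Definition c1l {K : twocat} {A B : ob K} (f : hom A B) : idm B ⊚ f = f :=
  comp1l (tlaws K) f.
Definition c1r {K : twocat} {A B : ob K} (f : hom A B) : f ⊚ idm A = f :=
  comp1r (tlaws K) f.

Definition yb_data (K : twocat) :=
  forall (A : ob K) (g f : hom A A), c2 (g ⊚ f) (f ⊚ g).

Record is_YB (K : twocat) (c : yb_data K) : Prop := {
  yb_nat : forall (A : ob K) (g g' f f' : hom A A) (β : c2 g g') (α : c2 f f'),
      (α ⊙ β) • c A g f = c A g' f' • (β ⊙ α);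
  yb_eq : forall (A : ob K) (h g f : hom A A),
      (c A g f ⊙ id2 h) • eqc (cA g f h) • (id2 g ⊙ c A h f)
        • eqc (eq_sym (cA g h f)) • (c A h g ⊙ id2 f)
      = eqc (cA f g h) • (id2 f ⊙ c A h g) • eqc (eq_sym (cA f h g))
        • (c A h f ⊙ id2 g) • eqc (cA h f g) • (id2 h ⊙ c A g f)
        • eqc (eq_sym (cA h g f));
  yb_idl : forall (A : ob K) (f : hom A A),
      c A (idm A) f = eqc (eq_sym (c1r f)) • eqc (c1l f);
  yb_idr : forall (A : ob K) (f : hom A A),
      c A f (idm A) = eqc (eq_sym (c1l f)) • eqc (c1r f)
}.

Record is_monad (K : twocat) (A : ob K) (b : hom A A)
    (mu : c2 (b ⊚ b) b) (eta : c2 (idm A) b) : Prop := {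
  monad_assoc : mu • (mu ⊙ id2 b) = mu • (id2 b ⊙ mu) • eqc (eq_sym (cA b b b));
  monad_unitl : mu • (eta ⊙ id2 b) = eqc (c1l b);
  monad_unitr : mu • (id2 b ⊙ eta) = eqc (c1r b)
}.

Record is_comonad (K : twocat) (A : ob K) (b : hom A A)
    (del : c2 b (b ⊚ b)) (eps : c2 b (idm A)) : Prop := {
  comonad_coassoc : (del ⊙ id2 b) • del = eqc (cA b b b) • (id2 b ⊙ del) • del;
  comonad_counitl : (eps ⊙ id2 b) • del = eqc (eq_sym (c1l b));
  comonad_counitr : (id2 b ⊙ eps) • del = eqc (eq_sym (c1r b))
}.

Record is_monad_distlaw (K : twocat) (A : ob K) (b : hom A A)
    (mu : c2 (b ⊚ b) b) (eta : c2 (idm A) b) (l : c2 (b ⊚ b) (b ⊚ b)) : Prop := {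
  mdl_mul_left : l • (mu ⊙ id2 b) =
      (id2 b ⊙ mu) • eqc (eq_sym (cA b b b)) • (l ⊙ id2 b) • eqc (cA b b b)
        • (id2 b ⊙ l) • eqc (eq_sym (cA b b b));
  mdl_mul_right : l • (id2 b ⊙ mu) =
      (mu ⊙ id2 b) • eqc (cA b b b) • (id2 b ⊙ l) • eqc (eq_sym (cA b b b))
        • (l ⊙ id2 b) • eqc (cA b b b);
  mdl_unit_left : l • (eta ⊙ id2 b) = (id2 b ⊙ eta) • eqc (eq_sym (c1r b)) • eqc (c1l b);
  mdl_unit_right : l • (id2 b ⊙ eta) = (eta ⊙ id2 b) • eqc (eq_sym (c1l b)) • eqc (c1r b)
}.

Record is_comonad_distlaw (K : twocat) (A : ob K) (b : hom A A)
    (del : c2 b (b ⊚ b)) (eps : c2 b (idm A)) (l : c2 (b ⊚ b) (b ⊚ b)) : Prop := {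
  cdl_comul_left : (del ⊙ id2 b) • l =
      eqc (cA b b b) • (id2 b ⊙ l) • eqc (eq_sym (cA b b b)) • (l ⊙ id2 b)
        • eqc (cA b b b) • (id2 b ⊙ del);
  cdl_comul_right : (id2 b ⊙ del) • l =
      eqc (eq_sym (cA b b b)) • (l ⊙ id2 b) • eqc (cA b b b) • (id2 b ⊙ l)
        • eqc (eq_sym (cA b b b)) • (del ⊙ id2 b);
  cdl_counit_left : (eps ⊙ id2 b) • l = eqc (eq_sym (c1l b)) • eqc (c1r b) • (id2 b ⊙ eps);
  cdl_counit_right : (id2 b ⊙ eps) • l = eqc (eq_sym (c1r b)) • eqc (c1l b) • (eps ⊙ id2 b)
}.

Definition bbbb_eq (K : twocat) (A : ob K) (b : hom A A)
  : (b ⊚ b) ⊚ (b ⊚ b) = (b ⊚ (b ⊚ b)) ⊚ b :=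
  eq_trans (cA (b ⊚ b) b b) (f_equal (fun x => x ⊚ b) (eq_sym (cA b b b))).

Record is_c_bimonad (K : twocat) (c : yb_data K) (A : ob K) (b : hom A A)
    (mu : c2 (b ⊚ b) b) (eta : c2 (idm A) b)
    (del : c2 b (b ⊚ b)) (eps : c2 b (idm A)) : Prop := {
  bm_monad : is_monad mu eta;
  bm_comonad : is_comonad del eps;
  bm_distlaw_monad : is_monad_distlaw mu eta (c A b b);
  bm_distlaw_comonad : is_comonad_distlaw del eps (c A b b);
  bm_compat : (mu ⊙ mu) • eqc (eq_sym (bbbb_eq b)) • ((id2 b ⊙ c A b b) ⊙ id2 b)
                • eqc (bbbb_eq b) • (del ⊙ del) = del • mu;
  bm_counit_mul : eps ⊙ eps = eqc (eq_sym (c1l (idm A))) • eps • mu;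
  bm_unit_comul : eta ⊙ eta = del • eta • eqc (c1l (idm A));
  bm_counit_unit : eps • eta = id2 (idm A)
}.

Unset Implicit Arguments.
Record prefunctor (K K' : twocat) := Prefunctor {
  fob : ob K -> ob K';
  fhom : forall A B : ob K, hom A B -> hom (fob A) (fob B);
  fc2 : forall (A B : ob K) (f g : hom A B), c2 f g -> c2 (fhom A B f) (fhom A B g);
  fc2_id : forall (A B : ob K) (f : hom A B), fc2 A B f f (id2 f) = id2 (fhom A B f);
  fc2_comp : forall (A B : ob K) (f g h : hom A B) (β : c2 g h) (α : c2 f g),
      fc2 A B f h (β • α) = fc2 A B g h β • fc2 A B f g α
}.
Set Implicit Arguments.
Arguments fob {K K'} _ _.
Arguments fhom {K K'} _ {A B} _.
Arguments fc2 {K K'} _ {A B f g} _.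

Record lax_structure (K K' : twocat) (F : prefunctor K K') := {
  lax2 : forall (A B C : ob K) (g : hom B C) (f : hom A B),
      c2 (fhom F g ⊚ fhom F f) (fhom F (g ⊚ f));
  lax0 : forall A : ob K, c2 (idm (fob F A)) (fhom F (idm A))
}.
Arguments lax2 {K K' F} _ {A B C} _ _.
Arguments lax0 {K K' F} _ _.

Record is_lax (K K' : twocat) (F : prefunctor K K') (L : lax_structure F) : Prop := {
  lax2_nat : forall (A B C : ob K) (g g' : hom B C) (f f' : hom A B)
      (β : c2 g g') (α : c2 f f'),
      fc2 F (β ⊙ α) • lax2 L g f = lax2 L g' f' • (fc2 F β ⊙ fc2 F α);
  lax2_assoc : forall (A B C D : ob K) (h : hom C D) (g : hom B C) (f : hom A B),
      lax2 L h (g ⊚ f) • (id2 (fhom F h) ⊙ lax2 L g f)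
      = eqc (f_equal (fhom F) (eq_sym (cA h g f))) • lax2 L (h ⊚ g) f
        • (lax2 L h g ⊙ id2 (fhom F f)) • eqc (cA (fhom F h) (fhom F g) (fhom F f));
  lax_unitl : forall (A B : ob K) (f : hom A B),
      lax2 L (idm B) f • (lax0 L B ⊙ id2 (fhom F f))
      = eqc (f_equal (fhom F) (eq_sym (c1l f))) • eqc (c1l (fhom F f));
  lax_unitr : forall (A B : ob K) (f : hom A B),
      lax2 L f (idm A) • (id2 (fhom F f) ⊙ lax0 L A)
      = eqc (f_equal (fhom F) (eq_sym (c1r f))) • eqc (c1r (fhom F f))
}.

Record colax_structure (K K' : twocat) (F : prefunctor K K') := {
  colax2 : forall (A B C : ob K) (g : hom B C) (f : hom A B),
      c2 (fhom F (g ⊚ f)) (fhom F g ⊚ fhom F f);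
  colax0 : forall A : ob K, c2 (fhom F (idm A)) (idm (fob F A))
}.
Arguments colax2 {K K' F} _ {A B C} _ _.
Arguments colax0 {K K' F} _ _.

Record is_colax (K K' : twocat) (F : prefunctor K K') (Cs : colax_structure F) : Prop := {
  colax2_nat : forall (A B C : ob K) (g g' : hom B C) (f f' : hom A B)
      (β : c2 g g') (α : c2 f f'),
      (fc2 F β ⊙ fc2 F α) • colax2 Cs g f = colax2 Cs g' f' • fc2 F (β ⊙ α);
  colax2_coassoc : forall (A B C D : ob K) (h : hom C D) (g : hom B C) (f : hom A B),
      (id2 (fhom F h) ⊙ colax2 Cs g f) • colax2 Cs h (g ⊚ f)
      = eqc (eq_sym (cA (fhom F h) (fhom F g) (fhom F f))) • (colax2 Cs h g ⊙ id2 (fhom F f))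
        • colax2 Cs (h ⊚ g) f • eqc (f_equal (fhom F) (cA h g f));
  colax_counitl : forall (A B : ob K) (f : hom A B),
      (colax0 Cs B ⊙ id2 (fhom F f)) • colax2 Cs (idm B) f
      = eqc (eq_sym (c1l (fhom F f))) • eqc (f_equal (fhom F) (c1l f));
  colax_counitr : forall (A B : ob K) (f : hom A B),
      (id2 (fhom F f) ⊙ colax0 Cs A) • colax2 Cs f (idm A)
      = eqc (eq_sym (c1r (fhom F f))) • eqc (f_equal (fhom F) (c1r f))
}.

Record bilax_functor (K K' : twocat) := BilaxFunctor {
  bl_F :> prefunctor K K';
  bl_lax : lax_structure bl_F;
  bl_colax : colax_structure bl_F;
  bl_is_lax : is_lax bl_lax;
  bl_is_colax : is_colax bl_colax;
  bl_unit_comul : forall A : ob K,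
      lax0 bl_lax A ⊙ lax0 bl_lax A
      = colax2 bl_colax (idm A) (idm A)
        • eqc (f_equal (fhom bl_F) (eq_sym (c1l (idm A)))) • lax0 bl_lax A
        • eqc (c1l (idm (fob bl_F A)));
  bl_counit_mul : forall A : ob K,
      colax0 bl_colax A ⊙ colax0 bl_colax A
      = eqc (eq_sym (c1l (idm (fob bl_F A)))) • colax0 bl_colax A
        • eqc (f_equal (fhom bl_F) (c1l (idm A))) • lax2 bl_lax (idm A) (idm A);
  bl_counit_unit : forall A : ob K,
      colax0 bl_colax A • lax0 bl_lax A = id2 (idm (fob bl_F A))
}.

Record colax_trans (K K' : twocat) (F G : prefunctor K K') := {
  ct1 : forall A : ob K, hom (fob F A) (fob G A);
  ct2 : forall (A B : ob K) (f : hom A B), c2 (ct1 B ⊚ fhom F f) (fhom G f ⊚ ct1 A)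
}.
Arguments ct1 {K K' F G} _ _.
Arguments ct2 {K K' F G} _ {A B} _.

Record is_colax_trans (K K' : twocat) (F G : prefunctor K K')
    (CF : colax_structure F) (CG : colax_structure G) (p : colax_trans F G) : Prop := {
  ct_nat : forall (A B : ob K) (f f' : hom A B) (α : c2 f f'),
      (fc2 G α ⊙ id2 (ct1 p A)) • ct2 p f = ct2 p f' • (id2 (ct1 p B) ⊙ fc2 F α);
  ct_comp : forall (A B C : ob K) (g : hom B C) (f : hom A B),
      (colax2 CG g f ⊙ id2 (ct1 p A)) • ct2 p (g ⊚ f)
      = eqc (cA (fhom G g) (fhom G f) (ct1 p A)) • (id2 (fhom G g) ⊙ ct2 p f)
        • eqc (eq_sym (cA (fhom G g) (ct1 p B) (fhom F f))) • (ct2 p g ⊙ id2 (fhom F f))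
        • eqc (cA (ct1 p C) (fhom F g) (fhom F f)) • (id2 (ct1 p C) ⊙ colax2 CF g f);
  ct_unit : forall A : ob K,
      (colax0 CG A ⊙ id2 (ct1 p A)) • ct2 p (idm A)
      = eqc (eq_sym (c1l (ct1 p A))) • eqc (c1r (ct1 p A)) • (id2 (ct1 p A) ⊙ colax0 CF A)
}.

Record lax_trans (K K' : twocat) (F G : prefunctor K K') := {
  lt1 : forall A : ob K, hom (fob F A) (fob G A);
  lt2 : forall (A B : ob K) (f : hom A B), c2 (fhom G f ⊚ lt1 A) (lt1 B ⊚ fhom F f)
}.
Arguments lt1 {K K' F G} _ _.
Arguments lt2 {K K' F G} _ {A B} _.

Record is_lax_trans (K K' : twocat) (F G : prefunctor K K')
    (LF : lax_structure F) (LG : lax_structure G) (p : lax_trans F G) : Prop := {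
  lt_nat : forall (A B : ob K) (f f' : hom A B) (α : c2 f f'),
      (id2 (lt1 p B) ⊙ fc2 F α) • lt2 p f = lt2 p f' • (fc2 G α ⊙ id2 (lt1 p A));
  lt_comp : forall (A B C : ob K) (g : hom B C) (f : hom A B),
      lt2 p (g ⊚ f) • (lax2 LG g f ⊙ id2 (lt1 p A))
      = (id2 (lt1 p C) ⊙ lax2 LF g f) • eqc (eq_sym (cA (lt1 p C) (fhom F g) (fhom F f)))
        • (lt2 p g ⊙ id2 (fhom F f)) • eqc (cA (fhom G g) (lt1 p B) (fhom F f))
        • (id2 (fhom G g) ⊙ lt2 p f) • eqc (eq_sym (cA (fhom G g) (fhom G f) (lt1 p A)));
  lt_unit : forall A : ob K,
      lt2 p (idm A) • (lax0 LG A ⊙ id2 (lt1 p A))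
      = (id2 (lt1 p A) ⊙ lax0 LF A) • eqc (eq_sym (c1r (lt1 p A))) • eqc (c1l (lt1 p A))
}.

Record is_left_comodule (K : twocat) (A X : ob K) (d : hom A A)
    (del : c2 d (d ⊚ d)) (eps : c2 d (idm A)) (x : hom X A) (l : c2 x (d ⊚ x)) : Prop := {
  lcomod_coassoc : (del ⊙ id2 x) • l = eqc (cA d d x) • (id2 d ⊙ l) • l;
  lcomod_counit : (eps ⊙ id2 x) • l = eqc (eq_sym (c1l x))
}.

Record is_left_module (K : twocat) (A X : ob K) (m : hom A A)
    (mu : c2 (m ⊚ m) m) (eta : c2 (idm A) m) (x : hom X A) (r : c2 (m ⊚ x) x) : Prop := {
  lmod_assoc : r • (mu ⊙ id2 x) = r • (id2 m ⊙ r) • eqc (eq_sym (cA m m x));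
  lmod_unit : r • (eta ⊙ id2 x) = eqc (c1l x)
}.

(* Main.v *)
Require Import Defs.
From Stdlib Require Import ProofIrrelevance.


Section Gen.
Context {K : twocat}.
Let L := tlaws K.

Lemma vA {A B : ob K} {f g h k : hom A B} (γ : c2 h k) (β : c2 g h) (α : c2 f g) :
  γ • (β • α) = γ • β • α.
Proof. exact (vcompA L γ β α). Qed.
Lemma v1l {A B : ob K} {f g : hom A B} (α : c2 f g) : id2 g • α = α.
Proof. exact (vcomp1l L α). Qed.
Lemma v1r {A B : ob K} {f g : hom A B} (α : c2 f g) : α • id2 f = α.
Proof. exact (vcomp1r L α). Qed.
Lemma hid {A B C : ob K} (g : hom B C) (f : hom A B) : id2 g ⊙ id2 f = id2 (g ⊚ f).
Proof. exact (hcomp_id2 L g f). Qed.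
Lemma ichg {A B C : ob K} {g g' g'' : hom B C} {f f' f'' : hom A B}
      (β' : c2 g' g'') (β : c2 g g') (α' : c2 f' f'') (α : c2 f f') :
      (β' • β) ⊙ (α' • α) = (β' ⊙ α') • (β ⊙ α).
Proof. exact (interchange L β' β α' α). Qed.

Lemma eqc_pi {A B : ob K} {f g : hom A B} (e e' : f = g) : eqc e = eqc e'.
Proof. now rewrite (proof_irrelevance _ e e'). Qed.
Lemma eqc_loop {A B : ob K} {f : hom A B} (e : f = f) : eqc e = id2 f.
Proof. now rewrite (proof_irrelevance _ e eq_refl). Qed.
Lemma eqc_comp {A B : ob K} {f g h : hom A B} (e1 : f = g) (e2 : g = h) :
  eqc e2 • eqc e1 = eqc (eq_trans e1 e2).
Proof. destruct e1, e2. simpl. apply v1l. Qed.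
Lemma eqc_comp' {A B : ob K} {f g h k : hom A B} (X : c2 h k) (e1 : f = g) (e2 : g = h) :
  X • eqc e2 • eqc e1 = X • eqc (eq_trans e1 e2).
Proof. rewrite <- vA, eqc_comp. reflexivity. Qed.
Lemma eqc_hl {A B C : ob K} {g g' : hom B C} (e : g = g') (f : hom A B) :
  eqc e ⊙ id2 f = eqc (f_equal (fun x => x ⊚ f) e).
Proof. destruct e. apply hid. Qed.
Lemma eqc_hr {A B C : ob K} (g : hom B C) {f f' : hom A B} (e : f = f') :
  id2 g ⊙ eqc e = eqc (f_equal (fun x => g ⊚ x) e).
Proof. destruct e. apply hid. Qed.

Lemma whisk1 {A B C : ob K} {g g' : hom B C} {f f' : hom A B} (β : c2 g g') (α : c2 f f') :
  (β ⊙ id2 f') • (id2 g ⊙ α) = β ⊙ α.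
Proof. rewrite <- ichg, v1r, v1l. reflexivity. Qed.
Lemma whisk2 {A B C : ob K} {g g' : hom B C} {f f' : hom A B} (β : c2 g g') (α : c2 f f') :
  (id2 g' ⊙ α) • (β ⊙ id2 f) = β ⊙ α.
Proof. rewrite <- ichg, v1r, v1l. reflexivity. Qed.
Lemma whisk_swap {A B C : ob K} {g g' : hom B C} {f f' : hom A B} (β : c2 g g') (α : c2 f f') :
  (β ⊙ id2 f') • (id2 g ⊙ α) = (id2 g' ⊙ α) • (β ⊙ id2 f).
Proof. now rewrite whisk1, whisk2. Qed.
Lemma hvl {A B C : ob K} {g g' g'' : hom B C} (β' : c2 g' g'') (β : c2 g g') (f : hom A B) :
  (β' • β) ⊙ id2 f = (β' ⊙ id2 f) • (β ⊙ id2 f).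
Proof. rewrite <- ichg, v1l. reflexivity. Qed.
Lemma hvr {A B C : ob K} (g : hom B C) {f f' f'' : hom A B} (α' : c2 f' f'') (α : c2 f f') :
  id2 g ⊙ (α' • α) = (id2 g ⊙ α') • (id2 g ⊙ α).
Proof. rewrite <- ichg, v1l. reflexivity. Qed.

Lemma wrr {A B C D : ob K} (h : hom C D) (g : hom B C) {f f' : hom A B} (α : c2 f f') :
  id2 h ⊙ (id2 g ⊙ α) = eqc (eq_sym (cA h g f')) • (id2 (h ⊚ g) ⊙ α) • eqc (cA h g f).
Proof. rewrite (hcompA L), hid. reflexivity. Qed.
Lemma wll {A B C D : ob K} {h h' : hom C D} (β : c2 h h') (g : hom B C) (f : hom A B) :
  (β ⊙ id2 g) ⊙ id2 f = eqc (cA h' g f) • (β ⊙ id2 (g ⊚ f)) • eqc (eq_sym (cA h g f)).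
Proof.
  rewrite <- hid, (hcompA L). rewrite <- !vA, eqc_comp, eqc_loop, v1r.
  rewrite !vA, eqc_comp, eqc_loop, v1l. reflexivity.
Qed.
Lemma wlr {A B C D : ob K} (h : hom C D) {g g' : hom B C} (β : c2 g g') (f : hom A B) :
  id2 h ⊙ (β ⊙ id2 f) = eqc (eq_sym (cA h g' f)) • ((id2 h ⊙ β) ⊙ id2 f) • eqc (cA h g f).
Proof. exact (hcompA L _ _ _). Qed.
Lemma hA {A B C D : ob K} {h h' : hom C D} {g g' : hom B C} {f f' : hom A B}
      (γ : c2 h h') (β : c2 g g') (α : c2 f f') :
      γ ⊙ (β ⊙ α) = eqc (eq_sym (cA h' g' f')) • ((γ ⊙ β) ⊙ α) • eqc (cA h g f).
Proof. exact (hcompA L _ _ _). Qed.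
Lemma h1r {A B : ob K} {f f' : hom A B} (α : c2 f f') :
  α ⊙ id2 (idm A) = eqc (eq_sym (c1r f')) • α • eqc (c1r f).
Proof. exact (hcomp1r L α). Qed.
Lemma h1l {A B : ob K} {f f' : hom A B} (α : c2 f f') :
  id2 (idm B) ⊙ α = eqc (eq_sym (c1l f')) • α • eqc (c1l f).
Proof. exact (hcomp1l L α). Qed.

Lemma eqc_nat {A B : ob K} {f f' g g' : hom A B} (e : f = f') (e' : g = g')
  (α : c2 f g) (α' : c2 f' g') : α' = eqc e' • α • eqc (eq_sym e) -> α' • eqc e = eqc e' • α.
Proof. intros ->. destruct e, e'. simpl. now rewrite v1l, !v1r. Qed.

End Gen.

Lemma fc2_eqc {K K' : twocat} (F : prefunctor K K') {A B : ob K} {f g : hom A B} (e : f = g) :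
  fc2 F (eqc e) = eqc (f_equal (fhom F) e).
Proof. destruct e. simpl. apply fc2_id. Qed.

Section Gen2.
Context {K : twocat}.
Lemma eqc_compR {A B : ob K} {f g h k : hom A B} (Z : c2 k f) (e1 : f = g) (e2 : g = h) :
  eqc e2 • (eqc e1 • Z) = eqc (eq_trans e1 e2) • Z.
Proof. rewrite vA, eqc_comp. reflexivity. Qed.
Lemma eqc_loopR {A B : ob K} {f k : hom A B} (Z : c2 k f) (e : f = f) : eqc e • Z = Z.
Proof. rewrite eqc_loop. apply v1l. Qed.
End Gen2.

Section P1a.
Variables (K K' : twocat) (F G : bilax_functor K K') (A : ob K) (b : hom A A)
  (eta : c2 (idm A) b) (del : c2 b (b ⊚ b)) (eps : c2 b (idm A)).
Hypothesis Hue : eps • eta = id2 (idm A).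
Hypothesis Hde : eta ⊙ eta = del • eta • eqc (c1l (idm A)).
Variable phi : colax_trans F G.
Hypothesis H : is_colax_trans (bl_colax F) (bl_colax G) phi.

Lemma p1_counit :
  ((colax0 (bl_colax G) A • fc2 G eps) ⊙ id2 (ct1 phi A)) •
  ((fc2 G eta ⊙ id2 (ct1 phi A)) • ct2 phi (idm A)
          • (id2 (ct1 phi A) ⊙ lax0 (bl_lax F) A) • eqc (eq_sym (c1r (ct1 phi A))))
  = eqc (eq_sym (c1l (ct1 phi A))).
Proof.
  rewrite hvl, !vA. rewrite <- (vA _ (fc2 G eps ⊙ _)), <- hvl.
  rewrite <- fc2_comp, Hue, fc2_id, hid, v1r.
  rewrite (ct_unit H).
  rewrite <- (vA _ (_ ⊙ colax0 _ _)), <- hvr, bl_counit_unit, hid, v1r.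
  rewrite !eqc_comp. apply eqc_pi.
Qed.
End P1a.

Lemma unit_comul' (K K' : twocat) (F : bilax_functor K K') (A : ob K) :
  colax2 (bl_colax F) (idm A) (idm A) • eqc (f_equal (fhom F) (eq_sym (c1l (idm A))))
    • lax0 (bl_lax F) A
  = (lax0 (bl_lax F) A ⊙ lax0 (bl_lax F) A) • eqc (eq_sym (c1l (idm (fob F A)))).
Proof. rewrite bl_unit_comul, <- (vA _ (eqc (c1l _))), eqc_comp, eqc_loop, v1r. reflexivity. Qed.

Section P1.
Variables (K K' : twocat) (F G : bilax_functor K K') (A : ob K).
Variable phi : colax_trans F G.
Hypothesis H : is_colax_trans (bl_colax F) (bl_colax G) phi.
Local Notation x := (ct1 phi A).
Local Notation Fi := (fhom F (idm A)).
Local Notation Gi := (fhom G (idm A)).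
Local Notation F0 := (lax0 (bl_lax F) A).

Lemma S1 :
  (ct2 phi (idm A) ⊙ id2 Fi) • (eqc (cA x Fi Fi) •
   ((id2 x ⊙ (colax2 (bl_colax F) (idm A) (idm A) • (eqc (f_equal (fhom F) (eq_sym (c1l (idm A))))
    • F0))) • eqc (eq_sym (c1r x))))
  = (id2 (Gi ⊚ x) ⊙ F0) • (eqc (eq_sym (c1r (Gi ⊚ x))) • (ct2 phi (idm A) •
     ((id2 x ⊙ F0) • eqc (eq_sym (c1r x))))).
Proof.
  rewrite (vA (colax2 _ _ _)), unit_comul', <- (whisk2 F0 F0), h1r.
  rewrite !vA, eqc_comp', eqc_loop, v1r.
  rewrite !hvr, wrr, !vA, eqc_comp', eqc_loop, v1r.
  rewrite whisk1, <- (whisk2 (ct2 phi (idm A)) F0), h1r, !vA.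
  rewrite eqc_hr, eqc_comp', eqc_comp', eqc_loop, v1r. reflexivity.
Qed.

Lemma S2 :
  id2 Gi ⊙ ((id2 x ⊙ F0) • eqc (eq_sym (c1r x)))
  = eqc (eq_sym (cA Gi x Fi)) • ((id2 (Gi ⊚ x) ⊙ F0) • eqc (eq_sym (c1r (Gi ⊚ x)))).
Proof.
  rewrite hvr, wrr, eqc_hr, <- !vA, eqc_comp. do 2 f_equal. apply eqc_pi.
Qed.

Lemma ct_eqc {f g : hom A A} (e : f = g) :
  (eqc (f_equal (fhom G) e) ⊙ id2 x) • ct2 phi f = ct2 phi g • (id2 x ⊙ eqc (f_equal (fhom F) e)).
Proof. destruct e. simpl. rewrite !hid, v1l, v1r. reflexivity. Qed.

Variables (b : hom A A) (eta : c2 (idm A) b) (del : c2 b (b ⊚ b)) (eps : c2 b (idm A)).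
Hypothesis Hue : eps • eta = id2 (idm A).
Hypothesis Hde : eta ⊙ eta = del • eta • eqc (c1l (idm A)).
Local Notation GB := (fhom G b).
Local Notation Geta := (fc2 G eta).
Local Notation phiI := (ct2 phi (idm A)).

Lemma Hde' : del • eta = (eta ⊙ eta) • eqc (eq_sym (c1l (idm A))).
Proof. rewrite Hde, <- vA, eqc_comp, eqc_loop, v1r. reflexivity. Qed.

Definition NF1 := ((Geta ⊙ Geta) ⊙ id2 x) • (eqc (cA Gi Gi x) • ((id2 Gi ⊙ phiI) •
  (eqc (eq_sym (cA Gi x Fi)) • ((id2 (Gi ⊚ x) ⊙ F0) • (eqc (eq_sym (c1r (Gi ⊚ x))) •
  (phiI • ((id2 x ⊙ F0) • eqc (eq_sym (c1r x))))))))).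

Lemma coL : ((colax2 (bl_colax G) b b • fc2 G del) ⊙ id2 x) •
  ((Geta ⊙ id2 x) • phiI • (id2 x ⊙ F0) • eqc (eq_sym (c1r x))) = NF1.
Proof.
  rewrite hvl, ?vA.
  rewrite <- (vA _ (fc2 G del ⊙ _)), <- hvl, <- fc2_comp, Hde', fc2_comp, fc2_eqc, hvl, ?vA.
  rewrite <- hvl, <- (colax2_nat (bl_is_colax G)), hvl, ?vA.
  rewrite <- (vA _ (eqc _ ⊙ _)), ct_eqc, ?vA.
  rewrite <- (vA _ (colax2 _ _ _ ⊙ _)), (ct_comp H), ?vA.
  rewrite <- (vA _ (id2 _ ⊙ colax2 _ _ _)), <- hvr.
  rewrite <- (vA _ (id2 _ ⊙ (colax2 _ _ _ • _))), <- hvr.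
  rewrite <- ?vA, S1. reflexivity.
Qed.

Lemma coR : eqc (cA GB GB x) • (id2 GB ⊙ ((Geta ⊙ id2 x) • phiI • (id2 x ⊙ F0) • eqc (eq_sym (c1r x))))
  • ((Geta ⊙ id2 x) • phiI • (id2 x ⊙ F0) • eqc (eq_sym (c1r x))) = NF1.
Proof.
  rewrite <- ?vA.
  rewrite (vA (id2 GB ⊙ _) (Geta ⊙ _)), <- (whisk_swap Geta).
  rewrite (hvr _ (Geta ⊙ id2 x)), (wlr _ Geta), ?vA.
  rewrite <- (wll Geta), <- hvl, whisk1.
  rewrite <- ?vA, (hvr _ phiI), S2, <- ?vA. reflexivity.
Qed.
End P1.

Lemma counit_mul' (K K' : twocat) (F : bilax_functor K K') (A : ob K) :
  colax0 (bl_colax F) A • (eqc (f_equal (fhom F) (c1l (idm A))) • lax2 (bl_lax F) (idm A) (idm A))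
  = eqc (c1l (idm (fob F A))) • (colax0 (bl_colax F) A ⊙ colax0 (bl_colax F) A).
Proof. rewrite bl_counit_mul, ?vA, eqc_comp, eqc_loop, v1l. reflexivity. Qed.

Section P2.
Variables (K K' : twocat) (F G : bilax_functor K K') (A : ob K).
Variable psi : lax_trans F G.
Hypothesis H : is_lax_trans (bl_lax F) (bl_lax G) psi.
Local Notation y := (lt1 psi A).
Local Notation Fi := (fhom F (idm A)).
Local Notation Gi := (fhom G (idm A)).
Local Notation F_0 := (colax0 (bl_colax F) A).
Local Notation psiI := (lt2 psi (idm A)).

Lemma T1 {W : hom (fob F A) (fob G A)} (Z : c2 W ((Gi ⊚ y) ⊚ Fi)) :
  eqc (c1r y) • ((id2 y ⊙ (F_0 • (eqc (f_equal (fhom F) (c1l (idm A))) • lax2 (bl_lax F) (idm A) (idm A))))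
   • (eqc (eq_sym (cA y Fi Fi)) • ((psiI ⊙ id2 Fi) • Z)))
  = eqc (c1r y) • ((id2 y ⊙ F_0) • (psiI • (eqc (c1r (Gi ⊚ y)) • ((id2 (Gi ⊚ y) ⊙ F_0) • Z)))).
Proof.
  rewrite counit_mul', <- (whisk1 F_0 F_0), h1r.
  rewrite <- ?vA, eqc_compR, eqc_loopR, ?hvr, <- ?vA, wrr, <- ?vA, eqc_compR, eqc_loopR.
  rewrite (vA (id2 _ ⊙ F_0) (psiI ⊙ _)), whisk2, <- (whisk1 psiI F_0), h1r, <- ?vA.
  rewrite eqc_hr, ?eqc_compR, eqc_loopR. reflexivity.
Qed.


Lemma lt_eqc {f g : hom A A} (e : f = g) :
  lt2 psi g • (eqc (f_equal (fhom G) e) ⊙ id2 y) = (id2 y ⊙ eqc (f_equal (fhom F) e)) • lt2 psi f.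
Proof. destruct e. simpl. rewrite !hid, v1l, v1r. reflexivity. Qed.

Variables (b : hom A A) (mu : c2 (b ⊚ b) b) (eps : c2 b (idm A)) (eta : c2 (idm A) b).
Hypothesis Hue : eps • eta = id2 (idm A).
Hypothesis Hce : eps ⊙ eps = eqc (eq_sym (c1l (idm A))) • eps • mu.
Local Notation GB := (fhom G b).
Local Notation Geps := (fc2 G eps).

Lemma Hce' : eps • mu = eqc (c1l (idm A)) • (eps ⊙ eps).
Proof. rewrite Hce, ?vA, eqc_comp, eqc_loop, v1l. reflexivity. Qed.

Definition NF2 := eqc (c1r y) • ((id2 y ⊙ F_0) • (psiI • (eqc (c1r (Gi ⊚ y)) •
  ((id2 (Gi ⊚ y) ⊙ F_0) • (eqc (cA Gi y Fi) • ((id2 Gi ⊙ psiI) •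
  (eqc (eq_sym (cA Gi Gi y)) • ((Geps ⊙ Geps) ⊙ id2 y)))))))).

Lemma mL : (eqc (c1r y) • (id2 y ⊙ F_0) • psiI • (Geps ⊙ id2 y)) •
  ((fc2 G mu • lax2 (bl_lax G) b b) ⊙ id2 y) = NF2.
Proof.
  rewrite hvl, <- ?vA.
  rewrite (vA (Geps ⊙ _) (fc2 G mu ⊙ _)), <- hvl, <- fc2_comp, Hce', fc2_comp, fc2_eqc, hvl.
  rewrite <- ?vA.
  rewrite <- hvl, (lax2_nat (bl_is_lax G)), hvl, <- ?vA.
  rewrite (vA psiI), lt_eqc, <- ?vA.
  rewrite (vA (lt2 psi _) (lax2 _ _ _ ⊙ _)), (lt_comp H), <- ?vA.
  rewrite (vA (id2 y ⊙ eqc _) (id2 y ⊙ lax2 _ _ _)), <- hvr, (vA (id2 y ⊙ F_0)), <- hvr.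
  rewrite T1. reflexivity.
Qed.

Lemma mR : (eqc (c1r y) • (id2 y ⊙ F_0) • psiI • (Geps ⊙ id2 y)) •
  (id2 GB ⊙ (eqc (c1r y) • (id2 y ⊙ F_0) • psiI • (Geps ⊙ id2 y))) • eqc (eq_sym (cA GB GB y)) = NF2.
Proof.
  rewrite <- ?vA.
  rewrite (vA (Geps ⊙ _) (id2 GB ⊙ _)), whisk_swap, <- ?vA.
  rewrite ?hvr, <- ?vA.
  rewrite (wlr _ Geps), <- ?vA.
  rewrite (vA (eqc (cA _ _ _))), <- (wll Geps), <- hvl, whisk2.
  rewrite wrr, eqc_hr, <- ?vA, eqc_compR.
  unfold NF2.
  rewrite (eqc_pi (eq_trans (eq_sym (cA Gi y (idm _))) (f_equal (fun x => Gi ⊚ x) (c1r y))) (c1r (Gi ⊚ y))).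
  reflexivity.
Qed.

Lemma munit : (eqc (c1r y) • (id2 y ⊙ F_0) • psiI • (Geps ⊙ id2 y)) •
  ((fc2 G eta • lax0 (bl_lax G) A) ⊙ id2 y) = eqc (c1l y).
Proof.
  rewrite hvl, ?vA, <- (vA _ (Geps ⊙ _)), <- hvl, <- fc2_comp, Hue, fc2_id, hid, v1r.
  rewrite <- (vA _ psiI), (lt_unit H), ?vA.
  rewrite <- (vA _ (id2 y ⊙ F_0)), <- hvr, bl_counit_unit, hid, v1r.
  rewrite !eqc_comp. apply eqc_pi.
Qed.
End P2.

Theorem proposition4p13 (K K' : twocat) (c : yb_data K) (Hc : is_YB c)
  (F G : bilax_functor K K')
  (A : ob K) (b : hom A A) (mu : c2 (b ⊚ b) b) (eta : c2 (idm A) b)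
  (del : c2 b (b ⊚ b)) (eps : c2 b (idm A))
  (Hb : is_c_bimonad c mu eta del eps) :
  (forall phi : colax_trans F G,
     is_colax_trans (bl_colax F) (bl_colax G) phi ->
     is_left_comodule
       (colax2 (bl_colax G) b b • fc2 G del)
       (colax0 (bl_colax G) A • fc2 G eps)
       ((fc2 G eta ⊙ id2 (ct1 phi A)) • ct2 phi (idm A)
          • (id2 (ct1 phi A) ⊙ lax0 (bl_lax F) A) • eqc (eq_sym (c1r (ct1 phi A)))))
  /\
  (forall psi : lax_trans F G,
     is_lax_trans (bl_lax F) (bl_lax G) psi ->
     is_left_module
       (fc2 G mu • lax2 (bl_lax G) b b)
       (fc2 G eta • lax0 (bl_lax G) A)
       (eqc (c1r (lt1 psi A)) • (id2 (lt1 psi A) ⊙ colax0 (bl_colax F) A)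
          • lt2 psi (idm A) • (fc2 G eps ⊙ id2 (lt1 psi A)))).
Proof.
  destruct Hb as [_ _ _ _ _ Hce Hde Hue]. split.
  - intros phi Hphi. constructor.
    + eapply eq_trans; [eapply coL | symmetry; eapply coR]; eauto.
    + eapply p1_counit; eauto.
  - intros psi Hpsi. constructor.
    + eapply eq_trans; [eapply mL | symmetry; eapply mR]; eauto.
    + eapply munit; eauto.
Qed.
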